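(* Let $P, Q \subseteq \mathbb{R}^d$ be full-dimensional semi-rational polytopes such that $L_{P+w}(s) = L_{Q+w}(s)$ for all $w \in \mathbb{Z}^d$ and all real $s > 0$. Then $P = Q$.
   Context: For a polytope $P \subseteq \mathbb{R}^d$ and real $s \ge 0$, $L_P(s) = \#(sP \cap \mathbb{Z}^d)$, where $sP = \{sx : x \in P\}$. A polytope is semi-rational if it can be written as $\bigcap_{i=1}^n \{x \in \mathbb{R}^d : \langle a_i, x\rangle \le b_i\}$ with all $a_i \in \mathbb{Z}^d$ and all $b_i \in \mathbb{R}$. *)

(* Defs.v *)
From mathcomp Require Import ssreflect ssrfun ssrbool eqtype ssrnat seq fintype.
From Stdlib Require Import Reals ZArith List.
Set Implicit Arguments.
Unset Strict Implicit.

Local Open Scope R_scope.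

Definition vec (d : nat) := 'I_d -> R.

Definition sumI (d : nat) (f : 'I_d -> R) : R :=
  foldr (fun i acc => f i + acc) 0 (enum 'I_d).

Definition dot (d : nat) (a x : vec d) : R := sumI (fun i => a i * x i).

Definition ZtoR (d : nat) (z : 'I_d -> Z) : vec d := fun i => IZR (z i).

Definition sumR (l : list R) : R := fold_right Rplus 0 l.

Definition conv_hull (d : nat) (V : list (vec d)) (x : vec d) : Prop :=
  exists lam : list R,
    length lam = length V /\
    Forall (fun l => 0 <= l) lam /\
    sumR lam = 1 /\
    forall i : 'I_d,
      x i = sumR (map (fun p : R * vec d => fst p * snd p i) (combine lam V)).

Definition is_polytope (d : nat) (P : vec d -> Prop) : Prop :=
  exists V : list (vec d), forall x, P x <-> conv_hull V x.

Definition semi_rational (d : nat) (P : vec d -> Prop) : Prop :=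
  exists H : list (('I_d -> Z) * R),
    forall x, P x <-> Forall (fun h => dot (ZtoR (fst h)) x <= snd h) H.

(* P is full-dimensional: its affine hull is R^d, i.e. P contains d+1
   affinely independent points v0, v_0, ..., v_{d-1}
   (the vectors v_i - v0 are linearly independent). *)
Definition full_dimensional (d : nat) (P : vec d -> Prop) : Prop :=
  exists (v0 : vec d) (v : 'I_d -> vec d),
    P v0 /\ (forall i, P (v i)) /\
    forall c : 'I_d -> R,
      (forall j : 'I_d, sumI (fun i => c i * (v i j - v0 j)) = 0) ->
      forall i, c i = 0.

Definition dilate (d : nat) (s : R) (P : vec d -> Prop) : vec d -> Prop :=
  fun y => exists x, P x /\ forall i, y i = s * x i.

Definition translate (d : nat) (P : vec d -> Prop) (w : vec d) : vec d -> Prop :=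
  fun y => exists x, P x /\ forall i, y i = x i + w i.

Definition lattice_card (d : nat) (A : vec d -> Prop) (n : nat) : Prop :=
  exists l : list ('I_d -> Z),
    NoDup l /\ length l = n /\ forall z, In z l <-> A (ZtoR z).

Definition ehrhart_value (d : nat) (P : vec d -> Prop) (s : R) (n : nat) : Prop :=
  lattice_card (dilate s P) n.

(* Main.v *)
Require Import Defs.
From mathcomp Require Import ssreflect ssrfun ssrbool eqtype ssrnat seq fintype.
From Stdlib Require Import Reals ZArith List.
From Stdlib Require Import Lra Lia Classical FunctionalExtensionality.
From mathcomp Require ssralg matrix mxalgebra Rstruct.

Module LA.
From mathcomp Require Import all_boot all_algebra.
From mathcomp Require Import Rstruct.
Import GRing.Theory.
Section LA.
Local Open Scope ring_scope.

Lemma sumI_big d (f : 'I_d -> R) : sumI f = \sum_(i < d) f i.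
Proof.
rewrite /sumI -big_enum /=.
elim: (enum 'I_d) => [|x l IH]; first by rewrite big_nil.
by rewrite big_cons /= IH.
Qed.

Lemma indep_hyp d (u : 'I_d -> vec d) (a : vec d) :
 (forall c : 'I_d -> R, (forall j, sumI (fun i => c i * u i j) = 0) -> forall i, c i = 0) ->
 (forall i, sumI (fun j => a j * u i j) = 0) -> forall j, a j = 0.
Proof.
move=> Hind Ha.
pose A : 'M[R]_d := \matrix_(i, j) u i j.
have rf : row_free A.
  rewrite -kermx_eq0; apply/negPn/negP => /rowV0Pn [v /sub_kermxP vA vn0].
  move/negP: vn0; apply; apply/eqP/matrixP => i0 i; rewrite mxE.
  rewrite (ord1 i0); apply: (Hind (fun i => v 0 i)) => j.
  rewrite sumI_big.
  move/matrixP: vA => /(_ 0 j); rewrite !mxE => H.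
  apply: etrans H.
  by apply: eq_bigr => k _; rewrite mxE.
rewrite row_free_unit in rf.
pose B : 'M[R]_(d, 1) := \col_j a j.
have AB : A *m B = 0.
  apply/matrixP => i k; rewrite !mxE; apply: etrans (Ha i); rewrite sumI_big.
  by apply: eq_bigr => j _; rewrite !mxE mulrC.
move=> j; have := mulKmx rf B; rewrite AB mulmx0 => /matrixP /(_ j 0).
by rewrite !mxE.
Qed.
End LA.
Lemma indep_hyp' d (u : 'I_d -> vec d) (a : vec d) :
 (forall c : 'I_d -> R, (forall j, sumI (fun i => Rmult (c i) (u i j)) = IZR Z0) -> forall i, c i = IZR Z0) ->
 (forall i, sumI (fun j => Rmult (a j) (u i j)) = IZR Z0) -> forall j, a j = IZR Z0.
Proof. exact: indep_hyp. Qed.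
End LA.

Set Implicit Arguments.
Unset Strict Implicit.
Local Open Scope R_scope.

Section Sums.
Variable d : nat.
Definition sL (l : list 'I_d) (f : 'I_d -> R) := foldr (fun i acc => f i + acc) 0 l.

Lemma sL_add l f g : sL l (fun i => f i + g i) = sL l f + sL l g.
Proof. rewrite /sL; elim: l => [|i l IH] /=; lra. Qed.

Lemma sL_scal l c f : sL l (fun i => c * f i) = c * sL l f.
Proof. rewrite /sL; elim: l => [|i l IH] /=; [ring| rewrite IH; ring]. Qed.

Lemma sL_ext l f g : (forall i, f i = g i) -> sL l f = sL l g.
Proof. move=> H; rewrite /sL; elim: l => [|i l IH] //=; rewrite H IH //. Qed.

Lemma sL_le l f g : (forall i, f i <= g i) -> sL l f <= sL l g.
Proof. move=> H; rewrite /sL; elim: l => [|i l IH] /=; [lra|]. have := H i; lra. Qed.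

Lemma sL_abs l f : Rabs (sL l f) <= sL l (fun i => Rabs (f i)).
Proof. rewrite /sL; elim: l => [|i l IH] /=; [rewrite Rabs_R0; lra|].
have := Rabs_triang (f i) (foldr (fun i acc => f i + acc) 0 l); lra. Qed.

Lemma sL_const l b : sL l (fun _ => b) = INR (size l) * b.
Proof. rewrite /sL; elim: l => [|i l IH]; [simpl; ring|]. rewrite [size _]/= S_INR; cbn [foldr]; rewrite IH; ring. Qed.

Lemma sL_nonneg l f : (forall i, 0 <= f i) -> 0 <= sL l f.
Proof. move=> H; rewrite /sL; elim: l => [|i l IH] /=; [lra|]. have := H i; lra. Qed.

Lemma sL_term l f i : (forall j, 0 <= f j) -> i \in l -> f i <= sL l f.
Proof. move=> H; rewrite /sL; elim: l => [|j l IH] //=.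
rewrite seq.in_cons => /orP [/eqP ->|Hi].
- have := sL_nonneg l H; rewrite /sL; lra.
- have := IH Hi; have := H j; lra. Qed.

Lemma sL_exch l1 l2 (F : 'I_d -> 'I_d -> R) :
  sL l1 (fun j => sL l2 (fun i => F i j)) = sL l2 (fun i => sL l1 (fun j => F i j)).
Proof.
elim: l1 => [|j l1 IH] /=.
- rewrite /sL /=; elim: l2 => [|i l2 IH2] //=; rewrite -IH2; ring.
- rewrite /sL /= in IH *. rewrite IH.
  have := sL_add l2 (fun i => F i j) (fun i => sL l1 (fun j => F i j)). rewrite /sL /= => ->. done.
Qed.

Lemma mem_enumI (i : 'I_d) : i \in enum 'I_d.
Proof. by rewrite mem_enum. Qed.

Lemma sumI_add (f g : 'I_d -> R) : sumI (fun i => f i + g i) = sumI f + sumI g.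
Proof. exact: sL_add. Qed.
Lemma sumI_scal c (f : 'I_d -> R) : sumI (fun i => c * f i) = c * sumI f.
Proof. exact: sL_scal. Qed.
Lemma sumI_ext (f g : 'I_d -> R) : (forall i, f i = g i) -> sumI f = sumI g.
Proof. exact: sL_ext. Qed.
Lemma sumI_le (f g : 'I_d -> R) : (forall i, f i <= g i) -> sumI f <= sumI g.
Proof. exact: sL_le. Qed.
Lemma sumI_abs (f : 'I_d -> R) : Rabs (sumI f) <= sumI (fun i => Rabs (f i)).
Proof. exact: sL_abs. Qed.
Lemma sumI_const b : sumI (fun _ : 'I_d => b) = INR d * b.
Proof. rewrite /sumI; have := sL_const (enum 'I_d) b; rewrite /sL size_enum_ord //. Qed.
Lemma sumI_nonneg (f : 'I_d -> R) : (forall i, 0 <= f i) -> 0 <= sumI f.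
Proof. exact: sL_nonneg. Qed.
Lemma sumI_term (f : 'I_d -> R) i : (forall j, 0 <= f j) -> f i <= sumI f.
Proof. move=> H; rewrite /sumI; have := @sL_term (enum (ordinal d)) f i H (mem_enumI i); rewrite /sL //. Qed.
Lemma sumI_exch (F : 'I_d -> 'I_d -> R) :
  sumI (fun j => sumI (fun i => F i j)) = sumI (fun i => sumI (fun j => F i j)).
Proof. exact: sL_exch. Qed.

Lemma dot_lin (a x y : vec d) al be :
  dot a (fun i => al * x i + be * y i) = al * dot a x + be * dot a y.
Proof.
rewrite /dot -!sumI_scal -sumI_add; apply: sumI_ext => i; ring.
Qed.

Lemma dot_sub (a x y : vec d) : dot a x - dot a y = sumI (fun i => a i * (x i - y i)).
Proof.
have := dot_lin a x y 1 (-1). rewrite /dot => H.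
transitivity (1 * sumI (fun i : 'I_d => a i * x i) + -1 * sumI (fun i : 'I_d => a i * y i)); first ring.
rewrite -H; apply: sumI_ext => i; ring.
Qed.

Lemma dot_bound (a x y : vec d) e : (forall i, Rabs (x i - y i) <= e) ->
  Rabs (dot a x - dot a y) <= sumI (fun i => Rabs (a i)) * e.
Proof.
move=> H; rewrite dot_sub; apply: Rle_trans (sumI_abs _) _.
rewrite Rmult_comm -sumI_scal; apply: sumI_le => i.
rewrite Rabs_mult Rmult_comm; apply: Rmult_le_compat_r; [apply: Rabs_pos|exact: H].
Qed.

Lemma dot_zero (a y : vec d) : (forall i, a i = 0) -> dot a y = 0.
Proof.
move=> H; rewrite /dot; transitivity (sumI (fun i : 'I_d => 0 * 0)).
  by apply: sumI_ext => i; rewrite H; ring.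
rewrite sumI_scal; ring.
Qed.
End Sums.
Arguments sL_add {d}.
Arguments sL_scal {d}.
Arguments sL_ext {d}.
Arguments sL_le {d}.
Arguments sL_abs {d}.
Arguments sL_const {d}.
Arguments sL_nonneg {d}.
Arguments sL_term {d}.
Arguments sL_exch {d}.
Arguments mem_enumI {d}.
Arguments sumI_add {d}.
Arguments sumI_scal {d}.
Arguments sumI_ext {d}.
Arguments sumI_le {d}.
Arguments sumI_abs {d}.
Arguments sumI_const {d}.
Arguments sumI_nonneg {d}.
Arguments sumI_term {d}.
Arguments sumI_exch {d}.
Arguments dot_lin {d}.
Arguments dot_sub {d}.
Arguments dot_bound {d}.
Arguments dot_zero {d}.

Lemma abs_le_split A B E : Rabs (A - B) <= E -> A <= B + E /\ B - E <= A.
Proof. unfold Rabs; destruct Rcase_abs; intros; lra. Qed.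

Lemma sumR_nonneg lam : Forall (fun l => 0 <= l) lam -> 0 <= sumR lam.
Proof. elim: lam => [|l lam IH] /= H; [lra|]. inversion H; subst. have := IH H3; lra. Qed.

Lemma combo_bound d B (i : 'I_d) : 0 <= B -> forall lam (V : list (vec d)),
  (forall p, In p V -> Rabs (p i) <= B) -> Forall (fun l => 0 <= l) lam ->
  Rabs (sumR (map (fun p : R * vec d => fst p * snd p i) (combine lam V))) <= B * sumR lam.
Proof.
move=> B0; elim=> [|l lam IH] V HV Hl.
- rewrite /= Rabs_R0; lra.
- case: V HV => [|p V] HV.
  + rewrite /= Rabs_R0. have := sumR_nonneg Hl. rewrite /sumR /=; nra.
  + inversion Hl; subst. simpl.
    have HH1 := IH V (fun q Hq => HV q (or_intror Hq)) H2.
    have HH2 := HV p (or_introl erefl).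
    apply: Rle_trans (Rabs_triang _ _) _.
    rewrite Rabs_mult (Rabs_pos_eq l) //. change (sumR (l :: lam)) with (l + sumR lam). nra.
Qed.

Lemma list_bound d (V : list (vec d)) : exists B, 0 <= B /\ forall p, In p V -> forall i, Rabs (p i) <= B.
Proof.
elim: V => [|p V [B' [B0 HB]]]; first by exists 0; split; [lra|move=> p []].
exists (sumI (fun i => Rabs (p i)) + B'); split.
- have := sumI_nonneg (fun i => Rabs (p i)) (fun i => Rabs_pos _); lra.
- move=> q [Hpq|Hq] i.
  + subst q; have := sumI_term (fun i => Rabs (p i)) i (fun i => Rabs_pos _); lra.
  + have := HB q Hq i; have := sumI_nonneg (fun i => Rabs (p i)) (fun i => Rabs_pos _); lra.
Qed.

Lemma polytope_bounded d (P : vec d -> Prop) : is_polytope P ->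
  exists B, 0 <= B /\ forall x, P x -> forall i, Rabs (x i) <= B.
Proof.
move=> [V HV]; have [B [B0 HB]] := list_bound V.
exists B; split => // x /HV [lam [Hlen [Hnn [Hs Hx]]]] i.
rewrite Hx. have := combo_bound B0 (fun p Hp => HB p Hp i) Hnn. rewrite Hs; lra.
Qed.

Lemma list_max (X : Type) (L : list X) (f : X -> R) : exists K, 0 <= K /\ forall h, In h L -> f h <= K.
Proof.
elim: L => [|h L [K [K0 HK]]]; first by exists 0; split; [lra|move=> h []].
exists (Rmax K (f h)); split; first by apply: Rle_trans K0 (Rmax_l _ _).
move=> h' [<-|Hh]; [exact: Rmax_r| apply: Rle_trans (HK _ Hh) (Rmax_l _ _)].
Qed.

Lemma min_slack (X : Type) (L : list X) (A : X -> Prop) (f : X -> R) :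
  (forall h, In h L -> A h \/ 0 < f h) -> exists eta, 0 < eta /\ forall h, In h L -> A h \/ eta <= f h.
Proof.
elim: L => [|h L IH] H; first by exists 1; split; [lra|move=> h []].
have [eta [eta0 He]] := IH (fun h' Hh' => H h' (or_intror Hh')).
case: (H h (or_introl erefl)) => [Ah|fh].
- exists eta; split => // h' [<-|Hh']; [by left|exact: He].
- exists (Rmin eta (f h)); split; first by apply: Rmin_pos.
  move=> h' [<-|Hh']; first by right; apply: Rmin_r.
  case: (He h' Hh') => [?|?]; [by left|right; apply: Rle_trans (Rmin_l _ _) _; done].
Qed.

Lemma interior d (P : vec d -> Prop) (HP : list (('I_d -> Z) * R)) :
  (forall x, P x <-> Forall (fun h => dot (ZtoR (fst h)) x <= snd h) HP) -> full_dimensional P ->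
  exists c, P c /\ exists eta, 0 < eta /\ forall h, In h HP ->
    (forall i, ZtoR (fst h) i = 0) \/ eta <= snd h - dot (ZtoR (fst h)) c.
Proof.
move=> HPe [v0 [v [Pv0 [Pv Hind]]]].
set D := INR d.+1.
have Dpos : 0 < D by apply: lt_0_INR; lia.
have DE : D = INR d + 1 by rewrite /D S_INR.
set c := fun j => (v0 j + sumI (fun i => v i j)) / D.
have dotc : forall a, dot a c = (dot a v0 + sumI (fun i => dot a (v i))) / D.
  move=> a; rewrite /dot /c.
  transitivity (sumI (fun j => / D * (a j * v0 j + sumI (fun i => a j * v i j)))).
    apply: sumI_ext => j; rewrite sumI_scal; field; lra.
  rewrite sumI_scal sumI_add (sumI_exch (fun i j => a j * v i j)); rewrite /Rdiv; ring.
have key : forall a b, D * (b - dot a c) = (b - dot a v0) + sumI (fun i => b - dot a (v i)).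
  move=> a b.
  have -> : sumI (fun i => b - dot a (v i)) = sumI (fun i => b + -1 * dot a (v i)).
    by apply: sumI_ext => i; ring.
  rewrite sumI_add sumI_scal sumI_const dotc DE; field; lra.
have lev : forall h, In h HP -> dot (ZtoR (fst h)) v0 <= snd h /\ forall i, dot (ZtoR (fst h)) (v i) <= snd h.
  move=> h Hh; split; [have := proj1 (HPe _) Pv0| move=> i; have := proj1 (HPe _) (Pv i)];
  rewrite Forall_forall => /(_ h Hh) //.
have Snn : forall h, In h HP -> 0 <= sumI (fun i => snd h - dot (ZtoR (fst h)) (v i)).
  move=> h Hh; apply: sumI_nonneg => i; have := (proj2 (lev h Hh)) i; lra.
exists c; split.
- apply/HPe/Forall_forall => h Hh.
  have := key (ZtoR (fst h)) (snd h); have := Snn h Hh; have := proj1 (lev h Hh). nra.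
- apply: min_slack => h Hh.
  case: (classic (forall i, ZtoR (fst h) i = 0)) => [Z|NZ]; [by left|right].
  have K := key (ZtoR (fst h)) (snd h); have S0 := Snn h Hh; have L0 := proj1 (lev h Hh).
  case: (Rle_lt_dec ((snd h - dot (ZtoR (fst h)) v0) + sumI (fun i => snd h - dot (ZtoR (fst h)) (v i))) 0) => [Hle|Hlt]; last by nra.
  exfalso; apply: NZ.
  apply: (@LA.indep_hyp' d (fun i j => v i j - v0 j) (ZtoR (fst h)) Hind) => i.
  rewrite -dot_sub.
  have := sumI_term (fun i => snd h - dot (ZtoR (fst h)) (v i)) i (fun i => ltac:(have := (proj2 (lev h Hh)) i; lra))
   . have := (proj2 (lev h Hh)) i. lra.
Qed.

Lemma IZR_small n : Rabs (IZR n) < 1 -> n = 0%Z.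
Proof.
move=> H; have [H1 H2] := Rabs_def2 _ _ H.
have : (-1 < n)%Z by apply: lt_IZR; lra.
have : (n < 1)%Z by apply: lt_IZR; lra.
lia.
Qed.

Lemma count_contra d (P Q : vec d -> Prop) RB (g : vec d) (k : 'I_d -> Z) del :
  0 <= RB -> 0 < del ->
  (forall x, P x -> forall i, Rabs (x i) <= RB) ->
  (forall x, Q x -> forall i, Rabs (x i) <= RB) ->
  (forall i, g i = del * IZR (k i)) -> P g ->
  (forall (w : 'I_d -> Z) (s : R), 0 < s -> forall n : nat,
     ehrhart_value (translate P (ZtoR w)) s n <-> ehrhart_value (translate Q (ZtoR w)) s n) ->
  Q g.
Proof.
move=> RB0 del0 BP BQ Hg Pg Hyp.
set N := up (2 * RB).
have [HN _] := archimed (2 * RB).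
set M := IZR N + del.
have HM : 2 * RB < M by rewrite /M -/N in HN *; lra.
have Mpos : 0 < M by lra.
set w := fun i => (N * k i)%Z.
have key : forall (x' : vec d) (z : 'I_d -> Z), (forall i, Rabs (x' i) <= RB) ->
    (forall i, IZR (z i) = / M * (x' i + ZtoR w i)) -> z = k /\ x' = g.
  move=> x' z Bx Hz.
  have Hz' : forall i, IZR (z i) * M = x' i + IZR N * IZR (k i).
    move=> i; rewrite Hz /ZtoR /w mult_IZR; field; lra.
  have E : forall i, z i = k i.
    move=> i.
    have E1 : M * IZR (z i - k i) = x' i - g i.
      rewrite minus_IZR Hg.
      transitivity (IZR (z i) * M - M * IZR (k i)); first ring.
      rewrite Hz' /M; ring.
    have Bg := BP g Pg i; have Bx' := Bx i.
    have E2 : Rabs (x' i - g i) <= 2 * RB.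
      unfold Rminus; apply: Rle_trans (Rabs_triang _ _) _; rewrite Rabs_Ropp; lra.
    have E3 : Rabs (IZR (z i - k i)) < 1.
      rewrite -E1 Rabs_mult (Rabs_pos_eq M) in E2; last lra.
      apply: (Rmult_lt_reg_l M) => //; lra.
    have := IZR_small E3; lia.
  split; first by apply: functional_extensionality.
  apply: functional_extensionality => i.
  apply: (Rplus_eq_reg_r (IZR N * IZR (k i))).
  rewrite -Hz' E Hg /M; ring.
have sPos : 0 < / M by apply: Rinv_0_lt_compat.
have HPside : ehrhart_value (translate P (ZtoR w)) (/ M) 1%nat.
  exists (k :: nil); split; first by constructor; [move=> []|constructor].
  split; first by [].
  move=> z; split.
  - case=> [<-|[]].
    exists (fun i => M * IZR (k i)); split.
      exists g; split => // i; rewrite /ZtoR /w mult_IZR Hg /M; ring.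
    move=> i; rewrite /ZtoR; field; lra.
  - case=> [x [[x' [Px' Hx]] Hz]]; left.
    have [E _] := key x' z (BP x' Px') (fun i => ltac:(rewrite -Hx; exact: Hz i)).
    by rewrite E.
have [l [Hnd [Hlen Hin]]] := proj1 (Hyp w (/ M) sPos 1%nat) HPside.
case: l Hnd Hlen Hin => [|z l] Hnd Hlen Hin; first by [].
have [H1 _] := Hin z.
case: (H1 (or_introl erefl)) => [x [[x' [Qx' Hx]] Hz]].
have [_ E] := key x' z (BQ x' Qx') (fun i => ltac:(rewrite -Hx; exact: Hz i)).
by rewrite -E.
Qed.

Lemma one_dir d (P Q : vec d -> Prop) :
  is_polytope P -> semi_rational P -> full_dimensional P ->
  is_polytope Q -> semi_rational Q ->
  (forall (w : 'I_d -> Z) (s : R), 0 < s -> forall n : nat,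
     ehrhart_value (translate P (ZtoR w)) s n <-> ehrhart_value (translate Q (ZtoR w)) s n) ->
  forall x, P x -> Q x.
Proof.
move=> polP [HP HPe] fdP polQ [HQ HQe] Hyp x Px.
apply: NNPP => nQx.
have [BP [BP0 HBP]] := polytope_bounded polP.
have [BQ [BQ0 HBQ]] := polytope_bounded polQ.
have [h' [Inh' Hgt]] : exists h, In h HQ /\ snd h < dot (ZtoR (fst h)) x.
  apply: NNPP => Hn; apply: nQx; apply/HQe/Forall_forall => h Hh.
  apply: Rnot_lt_le => Hlt; apply: Hn; exists h; split => //.
have [c [Pc [eta [eta0 Heta]]]] := interior HPe fdP.
have [K [K0 HK]] := list_max HP (fun h => sumI (fun i => Rabs (ZtoR (fst h) i))).
set a' := ZtoR (fst h') in Hgt *; set b' := snd h' in Hgt *.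
set K' := sumI (fun i => Rabs (a' i)).
have K'0 : 0 <= K' by apply: sumI_nonneg => i; apply: Rabs_pos.
set gam := dot a' x - b'.
have gam0 : 0 < gam by rewrite /gam; lra.
set e := dot a' c - b'.
have ea : 0 <= Rabs e by apply: Rabs_pos.
have eb : - Rabs e <= e by have := Rle_abs (- e); rewrite Rabs_Ropp; lra.
set t := gam / (2 * (Rabs e + gam)).
have ht : t * (Rabs e + gam) = gam / 2 by rewrite /t; field; lra.
have t0 : 0 < t by rewrite /t; apply: Rdiv_lt_0_compat; lra.
have t1 : t <= 1 by nra.
set yt := fun i => (1 - t) * x i + t * c i.
set del := Rmin (t * eta / (K + 1)) (gam / (4 * (K' + 1))).
have del0 : 0 < del.
  apply: Rmin_pos; [apply: Rdiv_lt_0_compat; nra| apply: Rdiv_lt_0_compat; lra].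
have delK : del * (K + 1) <= t * eta.
  have := Rmin_l (t * eta / (K + 1)) (gam / (4 * (K' + 1))); rewrite -/del => H.
  have -> : t * eta = (t * eta / (K + 1)) * (K + 1) by field; lra.
  apply: Rmult_le_compat_r; lra.
have delK' : del * (4 * (K' + 1)) <= gam.
  have := Rmin_r (t * eta / (K + 1)) (gam / (4 * (K' + 1))); rewrite -/del => H.
  have -> : gam = (gam / (4 * (K' + 1))) * (4 * (K' + 1)) by field; lra.
  apply: Rmult_le_compat_r; lra.
set k := fun i => (up (yt i / del) - 1)%Z.
set g := fun i => del * IZR (k i).
have Hg : forall i, Rabs (g i - yt i) <= del.
  move=> i; have [H1 H2] := archimed (yt i / del).
  rewrite /g /k minus_IZR.
  move: H1 H2; set u := IZR (up (yt i / del)); set r := yt i / del => H1 H2.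
  have Er : yt i = del * r by rewrite /r; field; lra.
  rewrite Er; apply: Rabs_le; split; nra.
have Pg : P g.
  apply/HPe/Forall_forall => h Hh.
  case: (Heta h Hh) => [Z|Hsl].
  - rewrite dot_zero //. have := proj1 (HPe c) Pc; rewrite Forall_forall => /(_ h Hh).
    by rewrite dot_zero.
  - have Hx := proj1 (HPe x) Px; rewrite Forall_forall in Hx; have Hxh := Hx h Hh.
    have Hyt := dot_lin (ZtoR (fst h)) x c (1 - t) t.
    rewrite -/yt in Hyt.
    have Hb := abs_le_split (dot_bound (ZtoR (fst h)) g yt del Hg).
    have HKa := HK h Hh; simpl in HKa.
    have Ka0 : 0 <= sumI (fun i => Rabs (ZtoR (fst h) i)) by apply: sumI_nonneg => i; apply: Rabs_pos.
    have : sumI (fun i => Rabs (ZtoR (fst h) i)) * del <= t * eta by nra.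
    nra.
have nQg : ~ Q g.
  move=> Qg; have := proj1 (HQe g) Qg; rewrite Forall_forall => /(_ h' Inh'); rewrite -/a' -/b' => Hle.
  have Hyt := dot_lin a' x c (1 - t) t; rewrite -/yt in Hyt.
  have Hb := abs_le_split (dot_bound a' g yt del Hg); rewrite -/K' in Hb.
  have : K' * del <= gam / 4 by nra.
  have : dot a' yt - b' >= gam / 2.
    rewrite Hyt; rewrite /gam /e in ht eb ea *. nra.
  lra.
apply: nQg.
apply: (@count_contra d P Q (BP + BQ) g k del) => //; first lra.
- move=> y Py i; have := HBP y Py i; lra.
- move=> y Qy i; have := HBQ y Qy i; lra.
Qed.

Unset Implicit Arguments.

Theorem corollary3p6 (d : nat) (P Q : vec d -> Prop) :
  is_polytope P -> semi_rational P -> full_dimensional P ->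
  is_polytope Q -> semi_rational Q -> full_dimensional Q ->
  (forall (w : 'I_d -> Z) (s : R), (0 < s)%R ->
     forall n : nat,
       ehrhart_value (translate P (ZtoR w)) s n <->
       ehrhart_value (translate Q (ZtoR w)) s n) ->
  forall x : vec d, P x <-> Q x.
Proof.
move=> pP sP fP pQ sQ fQ Hyp x; split.
- exact: (one_dir pP sP fP pQ sQ Hyp).
- apply: (one_dir pQ sQ fQ pP sP) => w s hs n; split; apply (Hyp w s hs n).
Qed.
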